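(* Let $\Sigma\subset\mathbb{R}^{n+1}$ be a pure, hereditary, $(n+1)$-dimensional fan with smoothness parameters $\alpha$, let $\Sigma'\subseteq\Sigma$ be a subfan, and let $W\subseteq\mathbb{R}^{n+1}$ be a linear subspace with $W\subseteq\bigcap_{\tau\in\Sigma_n\setminus\Sigma'_n}\mathrm{aff}(\tau)$. Then for every $i$, every associated prime $P$ of the $S$-module $H_i(\mathcal{R}/\mathcal{J}[\Sigma,\Sigma'])$ satisfies $P\subseteq I(W)$.
   Context: $S=\mathbb{R}[x_0,\ldots,x_n]$; $I(W)$ is the ideal of polynomials vanishing on $W$. A cone is the positive hull of finitely many vectors, of dimension that of its linear span $\mathrm{aff}(\gamma)$; a fan is a finite set of cones closed under faces, any two meeting in a common face; $\Sigma_i$ = $i$-dim cones, facets = maximal cones; pure: all facets of dim $n+1$; hereditary: for every face $\psi$ the graph on facets containing $\psi$ with edges for pairs meeting in an $n$-face is connected; $\partial\Sigma$ = subfan of faces contained in an $n$-face lying in exactly one facet; others interior. $l_\tau$ generates the ideal of $\mathrm{aff}(\tau)$. Smoothness parameters: integers $\alpha(\tau)\ge-1$ ($\tau\in\Sigma_n$), $\ge0$ on interior $\tau$; $\Sigma^{-1}$ = subfan of $\partial\Sigma$ of cones contained in some $\tau$ with $\alpha(\tau)=-1$; $J(\tau)=\langle l_\tau^{\alpha(\tau)+1}\rangle$ for $\tau\in\Sigma_n\setminus\Sigma^{-1}_n$, $J(\gamma)=\sum_{\tau\in\Sigma_n\setminus\Sigma^{-1}_n,\gamma\subseteq\tau}J(\tau)$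 for non-facets, $J(\sigma)=0$ for facets. With $u_\rho$ unit ray generators, $P(\gamma)=\mathrm{conv}(\{0\}\cup\{u_\rho:\rho\subseteq\gamma\})$, $\mathrm{lk}(\gamma)=\mathrm{conv}\{u_\rho\}$; $\mathcal{R}[\Sigma,\Sigma']_i=\bigoplus_{\gamma\in\Sigma_i\setminus\Sigma'_i}S$ with differential the cellular boundary of the relative cellular chain complex of $(P(\Sigma),\mathrm{lk}(\Sigma)\cup P(\Sigma'))$ with $S$ coefficients; $\mathcal{R}/\mathcal{J}[\Sigma,\Sigma']_i=\bigoplus_{\gamma\in\Sigma_i\setminus\Sigma'_i}S/J(\gamma)$ is the induced quotient complex. *)

(* Defs.v *)
From HB Require Import structures.
From mathcomp Require Import all_boot all_order all_algebra.
From mathcomp Require Import boolp reals.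
From mathcomp Require Import mpoly.
From Stdlib Require Import Relations.

Set Implicit Arguments.
Unset Strict Implicit.
Unset Printing Implicit Defensive.

Import Order.TTheory GRing.Theory Num.Theory.
Local Open Scope ring_scope.

Section FanDefs.
Variable R : realType.
Variable n : nat.

Notation vec := 'rV[R]_(n.+1).
Notation S := {mpoly R[n.+1]}.

Definition dotv (x y : vec) : R := (x *m y^T) 0 0.

Definition in_cone (gs : seq vec) (x : vec) : Prop :=
  exists c : 'I_(size gs) -> R,
    (forall j, 0 <= c j) /\ x = \sum_(j < size gs) c j *: nth 0 gs j.

(* matrix whose rows are the generators: its row space is aff(gamma) *)
Definition conemx (gs : seq vec) : 'M[R]_(size gs, n.+1) :=
  \matrix_(i < size gs, j < n.+1) (nth 0 gs i) 0 j.

Definition in_aff (gs : seq vec) (x : vec) : Prop := (x <= conemx gs)%MS.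

Definition cdim (gs : seq vec) : nat := \rank (conemx gs).

Variable I : finType.
Variable gens : I -> seq vec.

Definition subc (a b : I) : Prop :=
  forall x, in_cone (gens a) x -> in_cone (gens b) x.

Definition is_face_of (c a : I) : Prop :=
  exists w : vec, (forall x, in_cone (gens a) x -> 0 <= dotv w x) /\
    (forall x, in_cone (gens c) x <-> (in_cone (gens a) x /\ dotv w x = 0)).

(* Sigma = { cone (gens a) | a : I } is a fan of pointed cones,
   listed without repetition *)
Definition is_fan : Prop :=
  [/\ (forall a b, (forall x, in_cone (gens a) x <-> in_cone (gens b) x) -> a = b),
      (forall a x, in_cone (gens a) x -> in_cone (gens a) (- x) -> x = 0),
      (forall a (w : vec), (forall x, in_cone (gens a) x -> 0 <= dotv w x) ->
         exists b, forall x, in_cone (gens b) x <->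
                             (in_cone (gens a) x /\ dotv w x = 0)) &
      (forall a b, exists c,
         (forall x, in_cone (gens c) x <-> (in_cone (gens a) x /\ in_cone (gens b) x))
         /\ is_face_of c a /\ is_face_of c b)].

Definition fdim (a : I) : nat := cdim (gens a).

Definition maximal (s : I) : Prop := forall b, subc s b -> b = s.

Definition pure_full : Prop :=
  (exists s, fdim s = n.+1) /\ (forall s, maximal s -> fdim s = n.+1).

Definition adjacent (psi : I) (a b : I) : Prop :=
  [/\ maximal a, maximal b, subc psi a, subc psi b &
      exists t, fdim t = n /\
        forall x, in_cone (gens t) x <-> (in_cone (gens a) x /\ in_cone (gens b) x)].

Definition hereditary : Prop :=
  forall psi s1 s2, maximal s1 -> maximal s2 -> subc psi s1 -> subc psi s2 ->
    clos_refl_trans I (adjacent psi) s1 s2.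

Definition bdry_nface (t : I) : Prop :=
  fdim t = n /\ exists s, [/\ maximal s, subc t s &
                             forall s', maximal s' -> subc t s' -> s' = s].

Definition in_bdry (g : I) : Prop := exists t, bdry_nface t /\ subc g t.

Definition smoothness_params (alpha : I -> int) : Prop :=
  forall t, fdim t = n -> (-1 <= alpha t) /\ (~ in_bdry t -> 0 <= alpha t).

Definition subfan (Sp : I -> Prop) : Prop :=
  forall a b, Sp a -> subc b a -> Sp b.

Variable alpha : I -> int.

Definition sigma_m1 (g : I) : Prop :=
  in_bdry g /\ exists t, [/\ fdim t = n, alpha t = -1 & subc g t].

Definition gen_ideal_aff (t : I) (l : S) : Prop :=
  forall f : S, (forall x, in_aff (gens t) x -> f.@[fun j => x 0 j] = 0) <->
                exists g, f = g * l.

Definition J_nface (t : I) (f : S) : Prop :=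
  exists l g, gen_ideal_aff t l /\ f = g * l ^+ absz (alpha t + 1).

Definition J_rel (g t : I) : Prop := [/\ fdim t = n, ~ sigma_m1 t & subc g t].

Definition J_mem (g : I) (f : S) : Prop :=
  (maximal g -> f = 0) /\
  (~ maximal g -> exists h : I -> S, (forall t, J_rel g t -> J_nface t (h t)) /\
                   f = \sum_(t | `[< J_rel g t >]) h t).

Definition orient (a : I) : seq vec :=
  [seq row i (row_base (conemx (gens a))) | i <- enum 'I_(\rank (conemx (gens a)))].

Definition pairdet (A B : seq vec) : R :=
  \det (\matrix_(i < size A, j < size A) dotv (nth 0 A i) (nth 0 B j)).

Definition relint_pt (a : I) : vec := \sum_(v <- gens a) v.

(* [P(a) : P(b)] for b a facet of a: compare the orientation of aff(a)
   with (orientation of aff(b), inward vector) *)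
Definition incid (a b : I) : R :=
  Num.sg (pairdet (rcons (orient b) (relint_pt a)) (orient a)).

Definition facet_of (b a : I) : Prop := subc b a /\ fdim a = (fdim b).+1.

Variable Sp : I -> Prop.

(* chains of R[Sigma,Sigma']_i, as functions I -> S *)
Definition chain_deg (i : nat) (c : I -> S) : Prop :=
  forall g, c g != 0 -> fdim g = i /\ ~ Sp g.

Definition bd (c : I -> S) (b : I) : S :=
  \sum_(a | `[< facet_of b a >]) incid a b *: c a.

Definition is_cycle (c : I -> S) : Prop :=
  forall b, ~ Sp b -> J_mem b (bd c b).

(* c represents 0 in H_i(R/J[Sigma,Sigma']) *)
Definition is_bdry (i : nat) (c : I -> S) : Prop :=
  exists d, chain_deg i.+1 d /\
    forall g, fdim g = i -> ~ Sp g -> J_mem g (c g - bd d g).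

Definition prime_ideal (P : S -> Prop) : Prop :=
  [/\ P 0, (forall f g, P f -> P g -> P (f + g)),
      (forall f g, P g -> P (f * g)), ~ P 1 &
      (forall f g, P (f * g) -> P f \/ P g)].

(* P is an associated prime of H_i(R/J[Sigma,Sigma']) : P = Ann([c]) *)
Definition assoc_prime (i : nat) (P : S -> Prop) : Prop :=
  prime_ideal P /\
  exists c, [/\ chain_deg i c, is_cycle c &
                forall g : S, P g <-> is_bdry i (fun a => g * c a)].

End FanDefs.

(* Main.v *)
Require Import Defs.
From HB Require Import structures.
From mathcomp Require Import all_boot all_order all_algebra.
From mathcomp Require Import boolp reals.
From mathcomp Require Import mpoly.
From mathcomp Require Import ring lra.
Import Order.TTheory GRing.Theory Num.Theory.
Local Open Scope ring_scope.

Section PolyPart.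
Variable R : realType.
Variable k : nat.
Notation S := {mpoly R[k]}.

Lemma mp_ext (T : comNzRingType) (f1 f2 : {rmorphism S -> T}) :
  (forall c, f1 c%:MP = f2 c%:MP) -> (forall i, f1 'X_i = f2 'X_i) ->
  forall p, f1 p = f2 p.
Proof.
move=> hC hX p; rewrite (mpolyE p) !raddf_sum; apply: eq_bigr => m _.
rewrite -mul_mpolyC.
transitivity (f1 (p@_m)%:MP * f1 'X_[m]); first exact: rmorphM.
transitivity (f2 (p@_m)%:MP * f2 'X_[m]); last by symmetry; exact: rmorphM.
rewrite hC mpolyXE_id !rmorph_prod; congr (_ * _).
by apply: eq_bigr => i _; rewrite !rmorphXn hX.
Qed.

Variable w : 'I_k -> R.
Definition hh (i : 'I_k) : {poly S} := ('X_i - (w i)%:MP)%:P * 'X + ((w i)%:MP)%:P.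
Definition Psi (p : S) : {poly S} := mmap ((@polyC S) \o (@mpolyC k R)) hh p.

Lemma PsiC c : Psi c%:MP = (c%:MP)%:P.
Proof. by rewrite /Psi mmapC. Qed.

Lemma PsiX i : Psi 'X_i = hh i.
Proof. by rewrite /Psi mmapX mmap1U. Qed.

Lemma Psi1 p : (Psi p).[1] = p.
Proof.
have := @mp_ext _ (horner_eval (1:S) \o (Psi : {rmorphism S -> {poly S}})) idfun.
apply => [c|i] /=; rewrite /horner_eval /=.
  by rewrite mmapC /= hornerC.
by rewrite mmapX mmap1U /hh !hornerE subrK.
Qed.

Lemma Psi0 p : (Psi p)`_0 = (p.@[w])%:MP.
Proof.
rewrite -horner_coef0.
have := @mp_ext _ (horner_eval (0:S) \o (Psi : {rmorphism S -> {poly S}}))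
   ((@mpolyC k R) \o (meval w)).
apply => [c|i] /=; rewrite /horner_eval /=.
  by rewrite mmapC /= hornerC mevalC.
by rewrite mmapX mmap1U /hh !hornerE mevalXU.
Qed.

Lemma Psi_eval (x : 'I_k -> R) (l : R) p :
  (map_poly (meval x) (Psi p)).[l] = p.@[fun j => l * x j + (1 - l) * w j].
Proof.
have := @mp_ext _ (horner_eval l \o (map_poly (meval x) : {rmorphism {poly S} -> {poly R}})
   \o (Psi : {rmorphism S -> {poly S}})) (meval (fun j => l * x j + (1 - l) * w j)).
apply => [c|i] /=; rewrite /horner_eval /=.
  by rewrite mmapC /= map_polyC /= hornerC !mevalC.
rewrite mmapX mmap1U /hh rmorphD rmorphM /= !map_polyC map_polyX /= !hornerE.
rewrite mevalB mevalXU !mevalC mevalXU.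
by ring.
Qed.

Lemma poly_all0 (q : {poly R}) : (forall l, q.[l] = 0) -> q = 0.
Proof.
move=> hq; apply: (@roots_geq_poly_eq0 _ q [seq i%:R | i <- iota 0 (size q)]).
- by apply/allP => y /mapP [j _ ->]; rewrite /root hq.
- rewrite map_inj_uniq ?iota_uniq // => a b /eqP; rewrite eqr_nat => /eqP.
  done.
- by rewrite size_map size_iota.
Qed.

Lemma Psi_coef_vanish (A : ('I_k -> R) -> Prop) p :
  (forall x l, A x -> A (fun j => l * x j + (1 - l) * w j)) ->
  (forall x, A x -> p.@[x] = 0) ->
  forall j x, A x -> ((Psi p)`_j).@[x] = 0.
Proof.
move=> hA hp j x Ax.
have -> : ((Psi p)`_j).@[x] = (map_poly (meval x) (Psi p))`_j.
  by rewrite coef_map.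
suff -> : map_poly (meval x) (Psi p) = 0 by rewrite coef0.
by apply: poly_all0 => l; rewrite Psi_eval; apply: hp; apply: hA.
Qed.

Lemma PsiZ (r : R) p j : (Psi (r *: p))`_j = r *: (Psi p)`_j.
Proof. by rewrite /Psi mmapZ /= coefCM mul_mpolyC. Qed.

Lemma PsiMp p q : Psi (p * q) = Psi p * Psi q.
Proof. exact: (rmorphM (Psi : {rmorphism S -> {poly S}})). Qed.
Lemma PsiDp p q : Psi (p + q) = Psi p + Psi q.
Proof. exact: (rmorphD (Psi : {rmorphism S -> {poly S}})). Qed.
Lemma PsiBp p q : Psi (p - q) = Psi p - Psi q.
Proof. exact: (rmorphB (Psi : {rmorphism S -> {poly S}})). Qed.
Lemma Psi0p : Psi 0 = 0.
Proof. exact: (rmorph0 (Psi : {rmorphism S -> {poly S}})). Qed.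
Lemma PsiXn p e : Psi (p ^+ e) = Psi p ^+ e.
Proof. exact: (rmorphXn (Psi : {rmorphism S -> {poly S}})). Qed.
Lemma Psi_sum (T : Type) (s : seq T) (P : pred T) (F : T -> S) :
  Psi (\sum_(t <- s | P t) F t) = \sum_(t <- s | P t) Psi (F t).
Proof. exact: (rmorph_sum (Psi : {rmorphism S -> {poly S}})). Qed.

Lemma PsiM p q j : (Psi (p * q))`_j = \sum_(a < j.+1) (Psi p)`_a * (Psi q)`_(j - a).
Proof. by rewrite PsiMp coefM. Qed.
Lemma PsiD p q j : (Psi (p + q))`_j = (Psi p)`_j + (Psi q)`_j.
Proof. by rewrite PsiDp coefD. Qed.
Lemma PsiB p q j : (Psi (p - q))`_j = (Psi p)`_j - (Psi q)`_j.
Proof. by rewrite PsiBp coefB. Qed.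
Lemma Psi_0 j : (Psi 0)`_j = 0.
Proof. by rewrite Psi0p coef0. Qed.

End PolyPart.
Section FanPart.
Variable R : realType.
Variable n : nat.
Notation S := {mpoly R[n.+1]}.
Variable I : finType.
Variable gens : I -> seq 'rV[R]_(n.+1).
Variable alpha : I -> int.
Variable Sp : I -> Prop.
Variable wv : 'rV[R]_(n.+1).
Local Notation wf := (fun j => wv 0 j).
Local Notation Ps := (@Psi R n.+1 wf).

Lemma van_coef t (f : S) : (wv <= conemx (gens t))%MS ->
  (forall x, in_aff (gens t) x -> f.@[fun j => x 0 j] = 0) ->
  forall j x, in_aff (gens t) x -> ((Ps f)`_j).@[fun j => x 0 j] = 0.
Proof.
move=> hw hf j x hx.
apply: (@Psi_coef_vanish R n.+1 wf (fun y => in_aff (gens t) (\row_j y j))).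
- move=> y l hy.
  have -> : \row_j (l * y j + (1 - l) * wf j) = l *: \row_j y j + (1 - l) *: wv.
       by apply/rowP => jj; rewrite !mxE.
  by rewrite /in_aff addmx_sub // scalemx_sub.
- move=> y hy; rewrite -(hf _ hy); apply: meval_eq => j'; by rewrite mxE.
- have -> : \row_j x 0 j = x by apply/rowP => j'; rewrite mxE.
  exact: hx.
Qed.

Lemma Jnf_Psi t f j : (wv <= conemx (gens t))%MS ->
  J_nface gens alpha t f -> J_nface gens alpha t ((Ps f)`_j).
Proof.
move=> hw [l [q [hl ->]]].
have lvan : forall x, in_aff (gens t) x -> l.@[fun j => x 0 j] = 0.
  by move=> x; apply/(hl l).2; exists 1; rewrite mul1r.
have hu : forall a, exists u, (Ps l)`_a = u * l.
  move=> a; apply/(hl _).1 => x hx; exact: (van_coef t l hw lvan a x hx).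
case: (choice hu) => u hu'.
pose U := \poly_(a < size (Ps l)) u a.
have hPl : Ps l = U * l%:P.
  apply/polyP => a; rewrite coefMC coef_poly; case: ifP => ha; first exact: hu'.
  by rewrite nth_default ?mul0r // leqNgt ha.
exists l, ((Ps q * U ^+ absz (alpha t + 1))`_j); split; first exact: hl.
have E : Ps (q * l ^+ absz (alpha t + 1)) = Ps q * Ps l ^+ absz (alpha t + 1).
  by rewrite PsiMp PsiXn.
by rewrite E hPl exprMn -rmorphXn mulrA coefMC.
Qed.

Lemma Jmem_Psi g f j :
  (forall t, J_rel gens alpha g t -> (wv <= conemx (gens t))%MS) ->
  J_mem gens alpha g f -> J_mem gens alpha g ((Ps f)`_j).
Proof.
move=> hw [h1 h2]; split.
- by move=> /h1 ->; rewrite Psi_0.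
- move=> /h2 [h [hh ->]]; exists (fun t => (Ps (h t))`_j); split.
    by move=> t ht; apply: Jnf_Psi; [exact: hw | exact: hh].
  by rewrite Psi_sum coef_sum.
Qed.

Lemma gen_unique t l l' : gen_ideal_aff gens t l -> gen_ideal_aff gens t l' ->
  exists u, l' = u * l.
Proof.
move=> hl hl'; apply/(hl l').1; apply/(hl' l').2; exists 1; by rewrite mul1r.
Qed.

Lemma JnfD t f f' : J_nface gens alpha t f -> J_nface gens alpha t f' ->
  J_nface gens alpha t (f + f').
Proof.
move=> [l [q [hl ->]]] [l' [q' [hl' ->]]].
have [u ->] := gen_unique t l l' hl hl'.
exists l, (q + q' * u ^+ absz (alpha t + 1)); split; first exact: hl.
by rewrite exprMn mulrA mulrDl.
Qed.

Lemma JnfM t p f : J_nface gens alpha t f -> J_nface gens alpha t (p * f).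
Proof.
move=> [l [q [hl ->]]]; exists l, (p * q); split; first exact: hl.
by rewrite mulrA.
Qed.

Lemma Jnf0 t f : J_nface gens alpha t f -> J_nface gens alpha t 0.
Proof. move=> [l [q [hl _]]]; exists l, 0; split; first exact: hl.
by rewrite mul0r. Qed.

Lemma JmemD g f f' : J_mem gens alpha g f -> J_mem gens alpha g f' ->
  J_mem gens alpha g (f + f').
Proof.
move=> [a1 a2] [b1 b2]; split.
- by move=> hm; rewrite a1 // b1 // addr0.
- move=> hm; have [h [hh ->]] := a2 hm; have [h' [hh' ->]] := b2 hm.
  exists (fun t => h t + h' t); split; last by rewrite big_split.
  by move=> t ht; apply: JnfD; [exact: hh | exact: hh'].
Qed.

Lemma JmemM g p f : J_mem gens alpha g f -> J_mem gens alpha g (p * f).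
Proof.
move=> [a1 a2]; split.
- by move=> hm; rewrite a1 // mulr0.
- move=> hm; have [h [hh ->]] := a2 hm.
  exists (fun t => p * h t); split; last by rewrite mulr_sumr.
  by move=> t ht; apply: JnfM; exact: hh.
Qed.

Lemma Jmem0 g f : J_mem gens alpha g f -> J_mem gens alpha g 0.
Proof.
move=> [a1 a2]; split => // hm; have [h [hh _]] := a2 hm.
exists (fun _ => 0); split; last by rewrite big1.
by move=> t ht; apply: (@Jnf0 t (h t)); exact: hh.
Qed.

Lemma JmemB g f f' : J_mem gens alpha g f -> J_mem gens alpha g f' ->
  J_mem gens alpha g (f - f').
Proof.
move=> h1 h2; rewrite -mulN1r; apply: JmemD => //; exact: JmemM.
Qed.

Lemma bdD c c' b : bd gens (fun a => c a + c' a) b = bd gens c b + bd gens c' b.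
Proof. by rewrite /bd -big_split; apply: eq_bigr => a _; rewrite scalerDr. Qed.

Lemma bdM p c b : bd gens (fun a => p * c a) b = p * bd gens c b.
Proof. by rewrite /bd mulr_sumr; apply: eq_bigr => a _; rewrite scalerAr. Qed.

Lemma bd0 b : bd gens (fun _ => (0 : S)) b = 0.
Proof. by rewrite /bd big1 // => a _; rewrite scaler0. Qed.

Lemma bdPsi c b j : bd gens (fun a => (Ps (c a))`_j) b = (Ps (bd gens c b))`_j.
Proof.
rewrite /bd; apply: (big_rec2 (fun x y => x = (Ps y)`_j)).
  exact_no_check (esym (@Psi_0 R n.+1 wf j)).
move=> a y1 y2 _ ->.
have H1 : (Ps (incid gens a b *: c a + y2))`_j =
    (Ps (incid gens a b *: c a))`_j + (Ps y2)`_j.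
  exact_no_check (@PsiD R n.+1 wf (incid gens a b *: c a) y2 j).
have H2 : (Ps (incid gens a b *: c a))`_j = incid gens a b *: (Ps (c a))`_j.
  exact_no_check (@PsiZ R n.+1 wf (incid gens a b) (c a) j).
exact_no_check (esym (etrans H1 (congr1 (fun z => z + (Ps y2)`_j) H2))).
Qed.

Lemma bd_ext c c' b : (forall a, c a = c' a) -> bd gens c b = bd gens c' b.
Proof. by move=> h; rewrite /bd; apply: eq_bigr => a _; rewrite h. Qed.

End FanPart.

Section MainPart.
Variable R : realType.
Variable n : nat.
Notation S := {mpoly R[n.+1]}.
Variable I : finType.
Variable gens : I -> seq 'rV[R]_(n.+1).
Variable alpha : I -> int.
Variable Sp : I -> Prop.
Variable i : nat.
Variable wv : 'rV[R]_(n.+1).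
Local Notation wf := (fun j => wv 0 j).
Local Notation Ps := (@Psi R n.+1 wf).
Hypothesis Hinh : forall g, fdim gens g = i -> ~ Sp g -> exists f, J_mem gens alpha g f.
Hypothesis Hw : forall g t, ~ Sp g -> J_rel gens alpha g t -> (wv <= conemx (gens t))%MS.
Local Notation Bd := (is_bdry gens alpha Sp i).

Lemma Bd_ext {c c'} : Bd c -> (forall g, c g = c' g) -> Bd c'.
Proof.
move=> [e [he hJ]] h; exists e; split; first exact: he.
move=> g h1 h2; rewrite -h; exact: hJ.
Qed.

Lemma Bd0 : Bd (fun _ => 0).
Proof.
exists (fun _ => 0); split.
  by move=> g; rewrite eqxx.
move=> g h1 h2; rewrite bd0 subr0.
have [f hf] := Hinh g h1 h2; exact: (Jmem0 _ _ _ _ _ _ _ hf).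
Qed.

Lemma BdD c c' : Bd c -> Bd c' -> Bd (fun g => c g + c' g).
Proof.
move=> [e [he hJ]] [e' [he' hJ']]; exists (fun a => e a + e' a); split.
  move=> a hn; case: (eqVneq (e a) 0) => ea; last exact: he.
  by apply: he'; move: hn; rewrite ea add0r.
move=> g h1 h2.
have -> : c g + c' g - bd gens (fun a => e a + e' a) g =
          (c g - bd gens e g) + (c' g - bd gens e' g).
  by rewrite bdD opprD addrACA.
by apply: JmemD; [exact: hJ | exact: hJ'].
Qed.

Lemma BdM p c : Bd c -> Bd (fun g => p * c g).
Proof.
move=> [e [he hJ]]; exists (fun a => p * e a); split.
  move=> a hn; apply: he; apply: contraNneq hn => ->; by rewrite mulr0.
move=> g h1 h2.
have -> : p * c g - bd gens (fun a => p * e a) g = p * (c g - bd gens e g).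
  by rewrite bdM mulrBr.
by apply: JmemM; exact: hJ.
Qed.

Lemma BdPsi j c : Bd c -> Bd (fun g => (Ps (c g))`_j).
Proof.
move=> [e [he hJ]]; exists (fun a => (Ps (e a))`_j); split.
  move=> a hn; apply: he; apply: contraNneq hn => ->.
  apply/eqP; exact_no_check (@Psi_0 R n.+1 wf j).
move=> g h1 h2.
have -> : (Ps (c g))`_j - bd gens (fun a => (Ps (e a))`_j) g =
          (Ps (c g - bd gens e g))`_j.
  rewrite bdPsi.
  exact_no_check (esym (@PsiB R n.+1 wf (c g) (bd gens e g) j)).
apply: Jmem_Psi; last exact: hJ.
by move=> t ht; exact: Hw h2 ht.
Qed.

Lemma Bd_sum (T : Type) (s : seq T) (P : pred T) (F : T -> I -> S) :
  (forall x, P x -> Bd (F x)) -> Bd (fun g => \sum_(x <- s | P x) F x g).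
Proof.
move=> hF; elim: s => [|x s IH].
  by apply: (Bd_ext Bd0) => g; rewrite big_nil.
case hx: (P x).
  by apply: (Bd_ext (BdD _ _ (hF x hx) IH)) => g; rewrite big_cons hx.
by apply: (Bd_ext IH) => g; rewrite big_cons hx.
Qed.

Lemma main_bd g c : g.@[wf] != 0 -> Bd (fun a => g * c a) -> Bd c.
Proof.
move=> hg hB.
pose C := fun j a => (Ps (c a))`_j.
have hX : forall j, Bd (fun a => \sum_(b < j.+1) (Ps g)`_b * C (j - b)%N a).
  move=> j; apply: (Bd_ext (BdPsi j _ hB)) => a; rewrite /C.
  exact_no_check (@PsiM R n.+1 wf g (c a) j).
have hC : forall j, Bd (C j).
  elim/ltn_ind => j IH.
  have h1 : Bd (fun a => \sum_(b < j) (Ps g)`_(lift ord0 b) * C (j - lift ord0 b)%N a).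
    apply: Bd_sum => b _; apply: BdM; apply: IH; rewrite lift0.
    case: j b => [|j] b; first by case: b.
    by rewrite subSS ltnS leq_subr.
  have h2 : Bd (fun a => (g.@[wf])%:MP * C j a).
    apply: (Bd_ext (BdD _ _ (hX j) (BdM (-1) _ h1))) => a.
    rewrite big_ord_recl /= subn0 mulN1r addrK.
    congr (_ * _); exact_no_check (@Psi0 R n.+1 wf g).
  apply: (Bd_ext (BdM ((g.@[wf])^-1)%:MP _ h2)) => a.
  by rewrite !mul_mpolyC scalerA mulVf // scale1r.
pose K := (\max_(a : I) size (Ps (c a)))%N.
apply: (Bd_ext (Bd_sum _ (index_enum 'I_K) (fun _ => true) (fun j : 'I_K => C j) (fun j _ => hC j))).
move=> a.
have E := @Psi1 R n.+1 wf (c a).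
rewrite (horner_coef_wide _ (@leq_bigmax I (fun a => size (Ps (c a))) a)) in E.
have E2 : \sum_(b < K) (Ps (c a))`_b * 1 ^+ b = \sum_(b < K) C b a.
  by apply: eq_bigr => b _; rewrite expr1n mulr1.
exact_no_check (etrans (esym E2) E).
Qed.

End MainPart.

Theorem lemma5p2 (R : realType) (n : nat) (I : finType)
  (gens : I -> seq 'rV[R]_(n.+1)) (alpha : I -> int) (Sp : I -> Prop)
  (W : 'M[R]_(n.+1)) :
  is_fan gens -> pure_full gens -> hereditary gens ->
  smoothness_params gens alpha -> subfan gens Sp ->
  (forall t, fdim gens t = n -> ~ Sp t -> (W <= conemx (gens t))%MS) ->
  forall (i : nat) (P : {mpoly R[n.+1]} -> Prop),
    assoc_prime gens alpha Sp i P ->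
    forall g, P g -> forall w : 'rV[R]_(n.+1), (w <= W)%MS ->
      g.@[fun j => w 0 j] = 0.
Proof.
move=> hfan hpure hher hsm hsub hW i P [hprime [c [hcd hcyc hP]]] g Pg w hw.
case: (eqVneq (g.@[fun j => w 0 j]) 0) => // hg.
exfalso.
case: hprime => _ _ _ hn1 _; apply: hn1.
have hB := (hP g).1 Pg.
apply/(hP 1).2.
have Hinh : forall γ, fdim gens γ = i -> ~ Sp γ -> exists f, J_mem gens alpha γ f.
  move: hB => [d [_ hJ]] γ h1 h2; exists (g * c γ - bd gens d γ); exact: hJ.
have Hw : forall γ t, ~ Sp γ -> J_rel gens alpha γ t -> (w <= conemx (gens t))%MS.
  move=> γ t h2 [ht hm hst]; apply: submx_trans hw _; apply: hW => // hSt.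
  by apply: h2; exact: hsub t γ hSt hst.
have H := main_bd _ _ _ _ _ _ _ _ Hinh Hw _ _ hg hB.
apply: (Bd_ext _ _ _ _ _ _ _ H) => a; by rewrite mul1r.
Qed.
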